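(* Let $S\subset\mathbb R^2$ be a finite set of $n>4$ points, none of which lies at the center $O$ of SED$(S)$, and with no two points on a common ray from $O$. If $S$ is both Pre-regular and Equiangular, then $S$ is Regular, i.e., its points are the vertices of a regular $n$-gon.
   Context: SED$(S)$ is the smallest closed disk containing $S$, SEC$(S)$ its boundary circle, and $O$ its center. $S$ is \emph{Pre-regular} if there is a regular $n$-gon $P$ (the supporting polygon) such that for every pair of adjacent edges of $P$, one of the two edges contains exactly two points of $S$ (possibly at its endpoints) and the relative interior of the other edge contains no point of $S$. $S$ is \emph{Equiangular} if, listing the points of $S$ as $p_0,\dots,p_{n-1}$ in cyclic order around $O$, every angle $\angle p_iOp_{i+1}$ (indices mod $n$) equals $2\pi/n$. *)

(* Defs.v *)
From Stdlib Require Export Reals Lra Lia List.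
Export ListNotations.
Open Scope R_scope.

Definition pt : Type := (R * R)%type.

Definition dist (p q : pt) : R :=
  sqrt ((fst p - fst q) ^ 2 + (snd p - snd q) ^ 2).

Definition is_SED (P : list pt) (O : pt) (r : R) : Prop :=
  (forall p, In p P -> dist p O <= r) /\
  (forall (c : pt) (r' : R), (forall p, In p P -> dist p c <= r') -> r <= r').

Definition no_common_ray (P : list pt) (O : pt) : Prop :=
  forall p q, In p P -> In q P -> p <> q ->
    ~ (exists l, 0 < l /\ fst q - fst O = l * (fst p - fst O)
                      /\ snd q - snd O = l * (snd p - snd O)).

Definition reg_vertex (n : nat) (c : pt) (rad th : R) (k : nat) : pt :=
  (fst c + rad * cos (th + 2 * PI * INR k / INR n),
   snd c + rad * sin (th + 2 * PI * INR k / INR n)).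

Definition on_segment (a b x : pt) : Prop :=
  exists t, 0 <= t <= 1 /\
    x = (fst a + t * (fst b - fst a), snd a + t * (snd b - snd a)).

Definition in_relint (a b x : pt) : Prop :=
  exists t, 0 < t < 1 /\
    x = (fst a + t * (fst b - fst a), snd a + t * (snd b - snd a)).

Definition exactly_two (P : list pt) (a b : pt) : Prop :=
  exists p q, p <> q /\ In p P /\ In q P /\ on_segment a b p /\ on_segment a b q /\
    (forall x, In x P -> on_segment a b x -> x = p \/ x = q).

Definition empty_relint (P : list pt) (a b : pt) : Prop :=
  forall x, In x P -> ~ in_relint a b x.

(* Pre-regular: there is a regular n-gon (n = |S|), whose edges are
   [v_k, v_{(k+1) mod n}], such that for every pair of adjacent edges
   (edge k, edge (k+1) mod n), one contains exactly two points of S and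
   the relative interior of the other contains no point of S. *)
Definition pre_regular (P : list pt) : Prop :=
  let n := length P in
  exists (c : pt) (rad th : R), 0 < rad /\
    forall k, (k < n)%nat ->
      let v := reg_vertex n c rad th in
      let k1 := Nat.modulo (S k) n in
      let k2 := Nat.modulo (S k1) n in
      (exactly_two P (v k) (v k1) /\ empty_relint P (v k1) (v k2)) \/
      (exactly_two P (v k1) (v k2) /\ empty_relint P (v k) (v k1)).

Definition angle (a O b : pt) : R :=
  let ux := fst a - fst O in let uy := snd a - snd O in
  let wx := fst b - fst O in let wy := snd b - snd O in
  acos ((ux * wx + uy * wy) / (sqrt (ux ^ 2 + uy ^ 2) * sqrt (wx ^ 2 + wy ^ 2))).

(* Equiangular: listing the points of S as p_0, ..., p_{n-1} in cyclic
   (counterclockwise) order around O -- i.e. with polar angles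
   th_0 < th_1 < ... < th_{n-1} < th_0 + 2 PI -- every angle
   p_i O p_{(i+1) mod n} equals 2 PI / n. *)
Definition equiangular (P : list pt) (O : pt) : Prop :=
  let n := length P in
  exists (p : nat -> pt) (rho th : nat -> R),
    (forall x, In x P <-> exists i, (i < n)%nat /\ p i = x) /\
    (forall i, (i < n)%nat -> 0 < rho i /\
        p i = (fst O + rho i * cos (th i), snd O + rho i * sin (th i))) /\
    (forall i, (S i < n)%nat -> th i < th (S i)) /\
    (th (pred n) < th 0%nat + 2 * PI) /\
    (forall i, (i < n)%nat ->
        angle (p i) O (p (Nat.modulo (S i) n)) = 2 * PI / INR n).

Definition regular (P : list pt) : Prop :=
  let n := length P in
  exists (c : pt) (rad th : R), 0 < rad /\
    forall x, In x P <-> exists k, (k < n)%nat /\ x = reg_vertex n c rad th k.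

(* Main.v *)
Require Import Defs.
From Stdlib Require Import ZArith Classical_Prop.
Open Scope R_scope.

Lemma INR_pos_of (n : nat) : (4 < n)%nat -> 0 < INR n.
Proof. intros; apply lt_0_INR; lia. Qed.

Lemma v_shift n c rad th a m : (0 < n)%nat ->
  reg_vertex n c rad th (a + m * n) = reg_vertex n c rad th a.
Proof.
  intros Hn. unfold reg_vertex.
  assert (Hn' : INR n <> 0) by (apply not_0_INR; lia).
  replace (th + 2 * PI * INR (a + m * n) / INR n)
    with ((th + 2 * PI * INR a / INR n) + 2 * INR m * PI).
  2:{ rewrite plus_INR, mult_INR. field. exact Hn'. }
  rewrite cos_period, sin_period. reflexivity.
Qed.

Lemma v_mod n c rad th a : (0 < n)%nat ->
  reg_vertex n c rad th (a mod n) = reg_vertex n c rad th a.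
Proof.
  intros Hn. rewrite <- (v_shift n c rad th (a mod n) (a / n) Hn).
  f_equal. pose proof (Nat.div_mod_eq a n) as E. rewrite Nat.mul_comm in E. lia.
Qed.

Lemma cos_eq_cases al D : 0 < al <= PI -> 0 < D < 2 * PI -> cos D = cos al ->
  D = al \/ D = 2 * PI - al.
Proof.
  intros Ha HD Hc. destruct (Rle_dec D PI) as [Hle|Hgt].
  - left. apply cos_inj; lra.
  - right. assert (E : cos (2 * PI - D) = cos D).
    { rewrite cos_minus, cos_2PI, sin_2PI. ring. }
    assert (2 * PI - D = al) by (apply cos_inj; lra). lra.
Qed.

Lemma sqrt_polar r t : 0 < r ->
  sqrt ((r * cos t) ^ 2 + (r * sin t) ^ 2) = r.
Proof.
  intros Hr.
  replace ((r * cos t) ^ 2 + (r * sin t) ^ 2) with (r ^ 2 * ((sin t)² + (cos t)²))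
    by (unfold Rsqr; ring).
  rewrite sin2_cos2, Rmult_1_r. apply sqrt_pow2. lra.
Qed.

Lemma angle_polar (O : pt) r1 r2 t1 t2 : 0 < r1 -> 0 < r2 ->
  angle (fst O + r1 * cos t1, snd O + r1 * sin t1) O
        (fst O + r2 * cos t2, snd O + r2 * sin t2) = acos (cos (t1 - t2)).
Proof.
  intros H1 H2. unfold angle. cbn [fst snd]. f_equal.
  replace (fst O + r1 * cos t1 - fst O) with (r1 * cos t1) by ring.
  replace (snd O + r1 * sin t1 - snd O) with (r1 * sin t1) by ring.
  replace (fst O + r2 * cos t2 - fst O) with (r2 * cos t2) by ring.
  replace (snd O + r2 * sin t2 - snd O) with (r2 * sin t2) by ring.
  rewrite !sqrt_polar by assumption. rewrite cos_minus. field. lra.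
Qed.

Lemma key_trig (n j : nat) (A B gp gq d : R) :
  (2 < n)%nat -> (1 <= j)%nat -> (j < n)%nat -> 0 < A -> 0 < B -> 0 < d ->
  A * cos gp = d -> B * cos gq = d ->
  gp - gq = INR j * (2 * (PI / INR n)) ->
  2 * d * sin (PI / INR n) <= cos (PI / INR n) * Rabs (A * sin gp - B * sin gq).
Proof.
  intros Hn Hj1 Hjn HA HB Hd Ha Hb Hg.
  set (a := PI / INR n) in *.
  assert (HnR : 2 < INR n) by (replace 2 with (INR 2) by (simpl; ring); apply lt_INR; lia).
  assert (HjR : 1 <= INR j) by (replace 1 with (INR 1) by (simpl; ring); apply le_INR; lia).
  assert (Hjn' : INR j + 1 <= INR n) by (rewrite <- S_INR; apply le_INR; lia).
  assert (Hpi := PI_RGT_0).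
  assert (Ha0 : 0 < a) by (unfold a; apply Rdiv_lt_0_compat; lra).
  assert (HaPI : a * INR n = PI) by (unfold a; field; lra).
  assert (Ha2 : a < PI / 2) by nra.
  set (b := INR j * a).
  assert (Hb0 : a <= b) by (unfold b; nra).
  assert (Hba : b + a <= PI) by (unfold b; nra).
  assert (Hsa : 0 < sin a) by (apply sin_gt_0; lra).
  assert (Hca : 0 < cos a) by (apply cos_gt_0; lra).
  assert (Hsb : 0 < sin b) by (apply sin_gt_0; lra).
  assert (Hcp : 0 < cos gp).
  { destruct (Rlt_le_dec 0 (cos gp)) as [h|h]; [exact h|]. nra. }
  assert (Hcq : 0 < cos gq).
  { destruct (Rlt_le_dec 0 (cos gq)) as [h|h]; [exact h|]. nra. }
  assert (Hgb : gp - gq = 2 * b) by (unfold b; rewrite Hg; ring).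
  set (S := A * sin gp - B * sin gq).
  set (P := cos gp * cos gq).
  assert (HP : 0 < P) by (unfold P; nra).
  assert (E1 : A * sin gp * cos gp * cos gq = d * sin gp * cos gq) by (rewrite <- Ha; ring).
  assert (E2 : B * sin gq * cos gp * cos gq = d * cos gp * sin gq) by (rewrite <- Hb; ring).
  assert (ESP : S * P = 2 * d * sin b * cos b).
  { assert (sin (gp - gq) = 2 * sin b * cos b) by (rewrite Hgb; apply sin_2a).
    rewrite sin_minus in H. unfold S, P. nra. }
  assert (HPb : P <= cos b * cos b).
  { assert (cos (gp - gq) = 2 * cos b * cos b - 1) by (rewrite Hgb; apply cos_2a_cos).
    assert (H2 := COS_bound (gp + gq)). rewrite cos_plus in H2.
    rewrite cos_minus in H. unfold P. nra. }
  destruct (Rle_dec 0 (cos b)) as [Hcb|Hcb].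
  - assert (Hs : 0 <= sin (b - a)) by (apply sin_ge_0; lra).
    rewrite sin_minus in Hs.
    assert (HS : 0 <= S).
    { destruct (Rle_dec 0 S) as [h|h]; [exact h|].
      apply Rnot_le_lt in h. assert (S * P < 0) by nra. assert (0 <= 2*d*sin b*cos b) by (apply Rmult_le_pos; [nra| lra]). lra. }
    rewrite Rabs_right by lra.
    apply Rmult_le_reg_r with P; [exact HP|].
    replace (cos a * S * P) with (cos a * (S * P)) by ring. rewrite ESP.
    apply Rle_trans with (2 * d * sin a * (cos b * cos b)).
    + apply Rmult_le_compat_l; [nra|exact HPb].
    + assert (0 <= 2 * d * cos b) by nra. nra.
  - assert (Hs : 0 <= sin (b + a)) by (apply sin_ge_0; lra).
    rewrite sin_plus in Hs.
    assert (HS : S < 0).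
    { destruct (Rlt_dec S 0) as [h|h]; [exact h|].
      apply Rnot_lt_le in h. assert (0 <= S * P) by nra. assert (2*d*sin b*cos b < 0) by (assert (0 < 2*d*sin b) by nra; nra). lra. }
    rewrite Rabs_left by lra.
    apply Rmult_le_reg_r with P; [exact HP|].
    replace (cos a * - S * P) with (- (cos a * (S * P))) by ring. rewrite ESP.
    apply Rle_trans with (2 * d * sin a * (cos b * cos b)).
    + apply Rmult_le_compat_l; [nra|exact HPb].
    + assert (0 <= - (2 * d * cos b)) by nra. nra.
Qed.

Lemma equi_polar X O : (4 < length X)%nat -> equiangular X O ->
  exists (p : nat -> pt) (rho : nat -> R) (t0 : R),
    (forall x, In x X <-> exists i, (i < length X)%nat /\ p i = x) /\
    (forall i, (i < length X)%nat -> 0 < rho i /\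
       p i = (fst O + rho i * cos (t0 + INR i * (2 * (PI / INR (length X)))),
              snd O + rho i * sin (t0 + INR i * (2 * (PI / INR (length X)))))).
Proof.
  intros Hn4 [p [rho [ths [Hin [Hpol [Hmono [Hwrap Hang]]]]]]].
  set (n := length X) in *.
  exists p, rho, (ths 0%nat). split; [exact Hin|].
  set (al := 2 * PI / INR n).
  assert (HnR : 4 < INR n) by (replace 4 with (INR 4) by (simpl; ring); apply lt_INR; lia).
  assert (Hpi := PI_RGT_0).
  assert (Hal0 : 0 < al) by (unfold al; apply Rdiv_lt_0_compat; lra).
  assert (Haln : al * INR n = 2 * PI) by (unfold al; field; lra).
  assert (HalPI : al <= PI) by nra.
  assert (Hmon : forall m i, (i + m < n)%nat -> ths i <= ths (i + m)%nat).
  { induction m; intros i Hi.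
    - rewrite Nat.add_0_r. lra.
    - specialize (IHm i ltac:(lia)). specialize (Hmono (i + m)%nat ltac:(lia)).
      replace (i + S m)%nat with (S (i + m)) by lia. lra. }
  assert (Hstep : forall i, (S i < n)%nat ->
            ths (S i) - ths i = al \/ ths (S i) - ths i = 2 * PI - al).
  { intros i Hi. apply cos_eq_cases; [lra| |].
    - split. { specialize (Hmono i Hi). lra. }
      assert (h1 := Hmon i 0%nat ltac:(lia)). simpl in h1.
      assert (h2 := Hmon (pred n - S i)%nat (S i) ltac:(lia)).
      replace (S i + (pred n - S i))%nat with (pred n) in h2 by lia. lra.
    - specialize (Hang i ltac:(lia)).
      rewrite (Nat.mod_small (S i) n Hi) in Hang.
      destruct (Hpol i ltac:(lia)) as [Hr1 E1]. destruct (Hpol (S i) Hi) as [Hr2 E2].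
      rewrite E1, E2, angle_polar in Hang by assumption.
      assert (Hc : cos (acos (cos (ths i - ths (S i)))) = cos (2 * PI / INR n))
        by (rewrite Hang; reflexivity).
      rewrite cos_acos in Hc by apply COS_bound.
      replace (ths (S i) - ths i) with (- (ths i - ths (S i))) by ring.
      rewrite cos_neg. exact Hc. }
  assert (Hlow : forall m i, (i + m < n)%nat -> ths (i + m)%nat - ths i >= INR m * al).
  { induction m; intros i Hi.
    - rewrite Nat.add_0_r. simpl. lra.
    - specialize (IHm i ltac:(lia)).
      destruct (Hstep (i + m)%nat ltac:(lia)) as [h|h];
      replace (i + S m)%nat with (S (i + m)) by lia; rewrite S_INR; nra. }
  assert (Hexact : forall i, (S i < n)%nat -> ths (S i) - ths i = al).
  { intros i Hi. destruct (Hstep i Hi) as [h|h]; [exact h|exfalso].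
    assert (h1 := Hlow i 0%nat ltac:(lia)). simpl in h1.
    assert (h2 := Hlow (pred n - S i)%nat (S i) ltac:(lia)).
    replace (S i + (pred n - S i))%nat with (pred n) in h2 by lia.
    assert (E : INR (pred n - S i) + INR i = INR n - 2).
    { rewrite <- plus_INR. replace (pred n - S i + i)%nat with (n - 2)%nat by lia.
      rewrite minus_INR by lia. simpl. ring. }
    assert (INR (pred n - S i) * al + INR i * al = (INR n - 2) * al) by (rewrite <- E; ring).
    nra. }
  assert (Hth : forall i, (i < n)%nat -> ths i = ths 0%nat + INR i * al).
  { induction i; intros Hi.
    - simpl. ring.
    - rewrite S_INR. specialize (IHi ltac:(lia)). specialize (Hexact i Hi). lra. }
  intros i Hi. destruct (Hpol i Hi) as [Hr E]. split; [exact Hr|].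
  rewrite E, Hth by exact Hi.
  replace (INR i * al) with (INR i * (2 * (PI / INR n))) by (unfold al; field; lra).
  reflexivity.
Qed.

Definition seg (a b : pt) (t : R) : pt :=
  (fst a + t * (fst b - fst a), snd a + t * (snd b - snd a)).

Lemma seg_coords n c rad th K t : (0 < n)%nat ->
  let a := PI / INR n in
  let psi := th + 2 * PI * INR K / INR n + a in
  let y := seg (reg_vertex n c rad th K) (reg_vertex n c rad th (S K)) t in
  cos psi * (fst y - fst c) + sin psi * (snd y - snd c) = rad * cos a /\
  - sin psi * (fst y - fst c) + cos psi * (snd y - snd c) = rad * (2 * t - 1) * sin a.
Proof.
  intros Hn a psi y.
  assert (Hn' : INR n <> 0) by (apply not_0_INR; lia).
  assert (E1 : th + 2 * PI * INR K / INR n = psi - a) by (unfold psi; ring).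
  assert (E2 : th + 2 * PI * INR (S K) / INR n = psi + a)
    by (unfold psi, a; rewrite S_INR; field; exact Hn').
  unfold y, seg, reg_vertex. cbn [fst snd]. rewrite E1, E2.
  rewrite cos_minus, sin_minus, cos_plus, sin_plus.
  assert (H1 := sin2_cos2 psi). unfold Rsqr in H1.
  split.
  - transitivity (rad * cos a * (sin psi * sin psi + cos psi * cos psi)); [ring|].
    rewrite H1. ring.
  - transitivity (rad * (2 * t - 1) * sin a * (sin psi * sin psi + cos psi * cos psi)); [ring|].
    rewrite H1. ring.
Qed.

Lemma full_edge_bound (X : list pt) (O c : pt) (rad th t0 : R) (P : nat -> pt)
  (rho : nat -> R) (K : nat) :
  (4 < length X)%nat -> 0 < rad ->
  (forall x, In x X <-> exists i, (i < length X)%nat /\ P i = x) ->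
  (forall i, (i < length X)%nat -> 0 < rho i /\
       P i = (fst O + rho i * cos (t0 + INR i * (2 * (PI / INR (length X)))),
              snd O + rho i * sin (t0 + INR i * (2 * (PI / INR (length X)))))) ->
  exactly_two X (reg_vertex (length X) c rad th K) (reg_vertex (length X) c rad th (S K)) ->
  exists tp tq, 0 <= tp <= 1 /\ 0 <= tq <= 1 /\
    In (seg (reg_vertex (length X) c rad th K) (reg_vertex (length X) c rad th (S K)) tp) X /\
    In (seg (reg_vertex (length X) c rad th K) (reg_vertex (length X) c rad th (S K)) tq) X /\
    rad * cos (PI / INR (length X)) -
      (cos (th + 2 * PI * INR K / INR (length X) + PI / INR (length X)) * (fst O - fst c)
       + sin (th + 2 * PI * INR K / INR (length X) + PI / INR (length X)) * (snd O - snd c))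
    <= rad * cos (PI / INR (length X)) * Rabs (tp - tq).
Proof.
  intros Hn4 Hrad Hin Hpol [p [q [Hpq [Hp [Hq [[tp [Htp Ep]] [[tq [Htq Eq]] _]]]]]]].
  set (n := length X) in *.
  set (a := PI / INR n).
  set (psi := th + 2 * PI * INR K / INR n + a).
  set (vK := reg_vertex n c rad th K). set (vS := reg_vertex n c rad th (S K)).
  set (ux := cos psi * (fst O - fst c) + sin psi * (snd O - snd c)).
  change (p = seg vK vS tp) in Ep. change (q = seg vK vS tq) in Eq.
  exists tp, tq. split; [exact Htp|]. split; [exact Htq|].
  split. { rewrite <- Ep. exact Hp. }
  split. { rewrite <- Eq. exact Hq. }
  assert (HnR : 4 < INR n) by (replace 4 with (INR 4) by (simpl; ring); apply lt_INR; lia).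
  assert (Hpi := PI_RGT_0).
  assert (Ha0 : 0 < a) by (unfold a; apply Rdiv_lt_0_compat; lra).
  assert (HaPI : a * INR n = PI) by (unfold a; field; lra).
  assert (Hsa : 0 < sin a) by (apply sin_gt_0; nra).
  assert (Hca : 0 < cos a) by (apply cos_gt_0; nra).
  destruct (Rle_dec (rad * cos a - ux) 0) as [Hd|Hd].
  { assert (0 <= rad * cos a * Rabs (tp - tq)) by
      (apply Rmult_le_pos; [nra|apply Rabs_pos]). fold a psi ux. lra. }
  apply Rnot_le_lt in Hd.
  assert (Hco : forall i t, (i < n)%nat -> P i = seg vK vS t ->
     rho i * cos ((t0 + INR i * (2 * a)) - psi) = rad * cos a - ux /\
     rho i * sin ((t0 + INR i * (2 * a)) - psi) =
        rad * (2 * t - 1) * sin a - (- sin psi * (fst O - fst c) + cos psi * (snd O - snd c))).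
  { intros i t Hi E. destruct (Hpol i Hi) as [_ Ei].
    destruct (seg_coords n c rad th K t ltac:(lia)) as [C1 C2].
    fold a psi vK vS in C1, C2. rewrite <- E, Ei in C1, C2. cbn [fst snd] in C1, C2.
    fold a in C1, C2.
    rewrite cos_minus, sin_minus. unfold ux. split; lra. }
  assert (core : forall i j ti tj, (j < i)%nat -> (i < n)%nat ->
             P i = seg vK vS ti -> P j = seg vK vS tj ->
             rad * cos a - ux <= rad * cos a * Rabs (ti - tj)).
  { intros i j ti tj Hji Hi Ei Ej.
    destruct (Hco i ti Hi Ei) as [Ci Si]. destruct (Hco j tj ltac:(lia) Ej) as [Cj Sj].
    destruct (Hpol i Hi) as [Hri _]. destruct (Hpol j ltac:(lia)) as [Hrj _].
    assert (K1 := key_trig n (i - j) (rho i) (rho j) ((t0 + INR i * (2 * a)) - psi)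
                   ((t0 + INR j * (2 * a)) - psi) (rad * cos a - ux)
                   ltac:(lia) ltac:(lia) ltac:(lia) Hri Hrj Hd Ci Cj).
    fold a in K1.
    assert (Hdiff : rho i * sin (t0 + INR i * (2 * a) - psi) - rho j * sin (t0 + INR j * (2 * a) - psi)
                    = 2 * rad * sin a * (ti - tj)) by (rewrite Si, Sj; ring).
    rewrite Hdiff in K1.
    assert (Hg : t0 + INR i * (2 * a) - psi - (t0 + INR j * (2 * a) - psi) = INR (i - j) * (2 * a)).
    { rewrite minus_INR by lia. ring. }
    specialize (K1 Hg).
    rewrite Rabs_mult in K1.
    rewrite (Rabs_right (2 * rad * sin a)) in K1 by nra.
    apply Rmult_le_reg_l with (2 * sin a); [lra|].
    assert (0 <= Rabs (ti - tj)) by apply Rabs_pos. nra. }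
  fold a psi ux.
  destruct (Hin p) as [Hp1 _]. destruct (Hp1 Hp) as [i [Hi Ei]].
  destruct (Hin q) as [Hq1 _]. destruct (Hq1 Hq) as [j [Hj Ej]].
  destruct (Nat.lt_trichotomy i j) as [Hij|[Hij|Hij]].
  - rewrite Rabs_minus_sym. apply (core j i); try assumption; congruence.
  - subst j. exfalso. apply Hpq. congruence.
  - apply (core i j); try assumption; congruence.
Qed.

Lemma polar_decomp x1 x2 : ~ (x1 = 0 /\ x2 = 0) ->
  exists r b, 0 < r /\ x1 = r * cos b /\ x2 = r * sin b.
Proof.
  intros Hnz.
  set (r := sqrt (x1 ^ 2 + x2 ^ 2)).
  assert (Hpos : 0 < x1 ^ 2 + x2 ^ 2).
  { destruct (Req_dec x1 0) as [h|h].
    - assert (x2 <> 0) by tauto. pose proof (Rsqr_pos_lt x2 H). unfold Rsqr in *.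
      assert (0 <= x1 * x1) by nra. simpl. lra.
    - pose proof (Rsqr_pos_lt x1 h). unfold Rsqr in *.
      assert (0 <= x2 * x2) by nra. simpl. lra. }
  assert (Hr : 0 < r) by (apply sqrt_lt_R0; exact Hpos).
  assert (Hr2 : r * r = x1 ^ 2 + x2 ^ 2) by (apply sqrt_sqrt; lra).
  set (y := x1 / r).
  assert (Hy : -1 <= y <= 1).
  { unfold y. split.
    - apply Rmult_le_reg_r with r; [lra|]. unfold Rdiv. rewrite Rmult_assoc, Rinv_l by lra. nra.
    - apply Rmult_le_reg_r with r; [lra|]. unfold Rdiv. rewrite Rmult_assoc, Rinv_l by lra. nra. }
  assert (Hs : sqrt (1 - y²) = Rabs x2 / r).
  { assert (E : 1 - y² = (Rabs x2 / r) ^ 2).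
    { unfold y, Rsqr. rewrite <- (pow2_abs x2) in Hr2. field_simplify; [|lra|lra].
      f_equal. simpl in *. lra. }
    rewrite E. apply sqrt_pow2. apply Rmult_le_pos; [apply Rabs_pos|].
    left; apply Rinv_0_lt_compat; lra. }
  destruct (Rle_dec 0 x2) as [h|h].
  - exists r, (acos y). split; [exact Hr|]. split.
    + rewrite cos_acos by exact Hy. unfold y. field. lra.
    + rewrite sin_acos by exact Hy. rewrite Hs, Rabs_right by lra. field. lra.
  - exists r, (- acos y). split; [exact Hr|]. split.
    + rewrite cos_neg, cos_acos by exact Hy. unfold y. field. lra.
    + rewrite sin_neg, sin_acos by exact Hy. rewrite Hs, Rabs_left by lra. field. lra.
Qed.

Lemma no_halfplane (n : nat) (th x1 x2 : R) : (4 < n)%nat ->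
  (forall K : nat,
     0 <= cos (th + 2 * PI * INR K / INR n + PI / INR n) * x1
          + sin (th + 2 * PI * INR K / INR n + PI / INR n) * x2 \/
     0 <= cos (th + 2 * PI * INR (S K) / INR n + PI / INR n) * x1
          + sin (th + 2 * PI * INR (S K) / INR n + PI / INR n) * x2) ->
  x1 = 0 /\ x2 = 0.
Proof.
  intros Hn H. destruct (Classical_Prop.classic (x1 = 0 /\ x2 = 0)) as [h|h]; [exact h|exfalso].
  destruct (polar_decomp x1 x2 h) as [r [b [Hr [E1 E2]]]].
  set (a := PI / INR n).
  assert (HnR : 4 < INR n) by (replace 4 with (INR 4) by (simpl; ring); apply lt_INR; lia).
  assert (Hpi := PI_RGT_0).
  assert (Ha0 : 0 < a) by (unfold a; apply Rdiv_lt_0_compat; lra).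
  assert (HaPI : a * INR n = PI) by (unfold a; field; lra).
  assert (Ha4 : 2 * a < PI / 2) by nra.
  set (t := (b + PI - th) / (2 * a) - 1 / 2).
  destruct (archimed t) as [A1 A2].
  set (M := up t) in *.
  set (Mz := (M - 1)%Z).
  set (N := Z.to_nat (- Mz)).
  set (K := Z.to_nat (Mz + Z.of_nat N * Z.of_nat n)).
  assert (HK : INR K = IZR Mz + INR N * INR n).
  { unfold K. rewrite INR_IZR_INZ. rewrite Z2Nat.id by (assert (HN : (- Mz <= Z.of_nat N)%Z) by (unfold N; lia); assert (Z.of_nat N * 1 <= Z.of_nat N * Z.of_nat n)%Z by (apply Z.mul_le_mono_nonneg_l; lia); lia).
    rewrite plus_IZR, mult_IZR, <- !INR_IZR_INZ. reflexivity. }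
  assert (HMz : IZR Mz = IZR M - 1) by (unfold Mz; rewrite minus_IZR; reflexivity).
  set (e0 := th + (2 * IZR Mz + 1) * a - b - PI).
  assert (He0 : e0 = 2 * a * (IZR M - t - 1)).
  { unfold e0, t. rewrite HMz. field. lra. }
  assert (Hux : forall k : nat, cos (th + 2 * PI * INR k / INR n + PI / INR n) * x1
          + sin (th + 2 * PI * INR k / INR n + PI / INR n) * x2 =
          r * cos (th + 2 * PI * INR k / INR n + PI / INR n - b)).
  { intro k. rewrite E1, E2, cos_minus. ring. }
  assert (Hc : forall e, - (PI / 2) < e < PI / 2 ->
     forall k : nat, th + 2 * PI * INR k / INR n + PI / INR n - b = e + PI + 2 * INR N * PI ->
     cos (th + 2 * PI * INR k / INR n + PI / INR n) * x1
          + sin (th + 2 * PI * INR k / INR n + PI / INR n) * x2 < 0).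
  { intros e He k Ek. rewrite Hux, Ek, cos_period, neg_cos.
    assert (0 < cos e) by (apply cos_gt_0; lra). nra. }
  destruct (H K) as [H0|H0].
  - assert (h0 := Hc e0 ltac:(nra) K).
    assert (th + 2 * PI * INR K / INR n + PI / INR n - b = e0 + PI + 2 * INR N * PI).
    { rewrite HK. unfold e0, a.
      field. lra. }
    specialize (h0 H1). lra.
  - assert (h0 := Hc (e0 + 2 * a) ltac:(nra) (S K)).
    assert (th + 2 * PI * INR (S K) / INR n + PI / INR n - b = (e0 + 2 * a) + PI + 2 * INR N * PI).
    { rewrite S_INR, HK. unfold e0, a.
      field. lra. }
    specialize (h0 H1). lra.
Qed.

Lemma mod_S a n : n <> 0%nat -> (S (a mod n)) mod n = (S a) mod n.
Proof. intros Hn. replace (S (a mod n)) with (a mod n + 1)%nat by lia.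
  replace (S a) with (a + 1)%nat by lia. apply Nat.Div0.add_mod_idemp_l. Qed.

Lemma v_congr n c rad th a b : (0 < n)%nat -> a mod n = b mod n ->
  reg_vertex n c rad th a = reg_vertex n c rad th b.
Proof. intros Hn E. rewrite <- (v_mod n c rad th a Hn), <- (v_mod n c rad th b Hn), E. reflexivity. Qed.

Lemma v_inj n c rad th i j : (0 < n)%nat -> 0 < rad -> (i < j)%nat -> (j < n)%nat ->
  reg_vertex n c rad th i <> reg_vertex n c rad th j.
Proof.
  intros Hn Hrad Hij Hj E. unfold reg_vertex in E. injection E as E1 E2.
  set (ti := th + 2 * PI * INR i / INR n) in *.
  set (tj := th + 2 * PI * INR j / INR n) in *.
  assert (C : cos ti = cos tj) by (apply Rmult_eq_reg_l with rad; lra).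
  assert (Sn : sin ti = sin tj) by (apply Rmult_eq_reg_l with rad; lra).
  assert (H1 : cos (tj - ti) = 1).
  { rewrite cos_minus, <- C, <- Sn. pose proof (sin2_cos2 ti) as h. unfold Rsqr in h. lra. }
  assert (HnR : 0 < INR n) by (apply lt_0_INR; lia).
  assert (Hji : 1 <= INR j - INR i) by (rewrite <- minus_INR by lia;
     replace 1 with (INR 1) by (simpl; ring); apply le_INR; lia).
  assert (Hjn : INR j < INR n) by (apply lt_INR; lia).
  assert (Hi0 : 0 <= INR i) by apply pos_INR.
  set (y := PI * (INR j - INR i) / INR n).
  assert (Ey : tj - ti = 2 * y) by (unfold tj, ti, y; field; lra).
  assert (Hpi := PI_RGT_0).
  assert (Hy0 : 0 < y) by (unfold y; apply Rdiv_lt_0_compat; nra).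
  assert (Hy1 : y < PI).
  { unfold y. apply Rmult_lt_reg_r with (INR n); [lra|].
    unfold Rdiv. rewrite Rmult_assoc, Rinv_l by lra. nra. }
  rewrite Ey, cos_2a_sin in H1.
  assert (0 < sin y) by (apply sin_gt_0; lra). nra.
Qed.

Theorem lemma5p12 (X : list pt) (O : pt) (r : R) :
  NoDup X ->
  (4 < length X)%nat ->
  is_SED X O r ->
  (forall p, In p X -> p <> O) ->
  no_common_ray X O ->
  pre_regular X ->
  equiangular X O ->
  regular X.
Proof.
  intros Hnd Hn4 _ _ _ Hpre Heq.
  destruct (equi_polar X O Hn4 Heq) as [P [rho [t0 [Hin Hpol]]]].
  destruct Hpre as [c [rad [th [Hrad Hpre]]]].
  set (n := length X) in *.
  set (v := reg_vertex n c rad th).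
  assert (Hn0 : (0 < n)%nat) by lia.
  assert (Hnn : n <> 0%nat) by lia.
  set (full := fun K => exactly_two X (v K) (v (S K))).
  assert (HF : forall K, full K \/ full (S K)).
  { intro K. specialize (Hpre (K mod n) (Nat.mod_upper_bound K n Hnn)). cbv zeta in Hpre.
    fold v in Hpre.
    assert (E0 : v (K mod n) = v K) by (apply v_mod; lia).
    assert (E1 : v (S (K mod n) mod n) = v (S K)).
    { apply v_congr; [lia|]. rewrite Nat.Div0.mod_mod. apply mod_S; lia. }
    assert (E2 : v (S (S (K mod n) mod n) mod n) = v (S (S K))).
    { apply v_congr; [lia|]. rewrite Nat.Div0.mod_mod.
      rewrite mod_S by lia. replace (S (S (K mod n))) with (K mod n + 2)%nat by lia.
      rewrite Nat.Div0.add_mod_idemp_l. f_equal; lia. }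
    rewrite E0, E1, E2 in Hpre. unfold full. tauto. }
  set (a := PI / INR n).
  assert (HnR : 4 < INR n) by (replace 4 with (INR 4) by (simpl; ring); apply lt_INR; lia).
  assert (Hpi := PI_RGT_0).
  assert (Ha0 : 0 < a) by (unfold a; apply Rdiv_lt_0_compat; lra).
  assert (HaPI : a * INR n = PI) by (unfold a; field; lra).
  assert (Hca : 0 < cos a) by (apply cos_gt_0; nra).
  assert (Hfb := fun K (HK : full K) => full_edge_bound X O c rad th t0 P rho K Hn4 Hrad Hin Hpol HK).
  fold n a v in Hfb.
  assert (HOc : fst O - fst c = 0 /\ snd O - snd c = 0).
  { apply (no_halfplane n th); [exact Hn4|].
    intro K. destruct (HF K) as [h|h]; [left|right];
      destruct (Hfb _ h) as [tp [tq [Htp [Htq [_ [_ Hb]]]]]];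
      assert (Rabs (tp - tq) <= 1) by (apply Rabs_le; lra);
      fold a in Hb |- *;
      assert (rad * cos a * Rabs (tp - tq) <= rad * cos a) by
        (rewrite <- (Rmult_1_r (rad * cos a)) at 2; apply Rmult_le_compat_l; [nra|assumption]);
      lra. }
  destruct HOc as [HO1 HO2].
  assert (Hend : forall K, full K -> In (v K) X /\ In (v (S K)) X).
  { intros K h. destruct (Hfb K h) as [tp [tq [Htp [Htq [Hp [Hq Hb]]]]]].
    rewrite HO1, HO2, !Rmult_0_r, Rplus_0_r, Rminus_0_r in Hb.
    assert (Hab : 1 <= Rabs (tp - tq)).
    { apply Rmult_le_reg_l with (rad * cos a); [nra|]. lra. }
    assert (Hs0 : forall t, t = 0 -> seg (v K) (v (S K)) t = v K).
    { intros t ->. unfold seg. rewrite !Rmult_0_l, !Rplus_0_r. destruct (v K); reflexivity. }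
    assert (Hs1 : forall t, t = 1 -> seg (v K) (v (S K)) t = v (S K)).
    { intros t ->. unfold seg. destruct (v K), (v (S K)). simpl. f_equal; ring. }
    destruct (Rle_dec 0 (tp - tq)) as [g|g].
    - rewrite Rabs_right in Hab by lra.
      rewrite (Hs1 tp) in Hp by lra. rewrite (Hs0 tq) in Hq by lra. tauto.
    - rewrite Rabs_left in Hab by lra.
      rewrite (Hs0 tp) in Hp by lra. rewrite (Hs1 tq) in Hq by lra. tauto. }
  assert (Hall : forall k, (k < n)%nat -> In (v k) X).
  { intros k Hk. assert (E : v (S (k + n - 1)) = v k).
    { unfold v. replace (S (k + n - 1)) with (k + 1 * n)%nat by lia. apply v_shift; lia. }
    destruct (HF (k + n - 1)%nat) as [h|h].
    - rewrite <- E. apply (Hend _ h).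
    - rewrite <- E. apply (Hend _ h). }
  set (l := map v (seq 0 n)).
  assert (Hl : NoDup l).
  { apply NoDup_map_NoDup_ForallPairs; [|apply seq_NoDup].
    intros i j Hi Hj E. apply in_seq in Hi. apply in_seq in Hj.
    destruct (Nat.lt_trichotomy i j) as [g|[g|g]]; [|exact g|].
    - exfalso. exact (v_inj n c rad th i j Hn0 Hrad g ltac:(lia) E).
    - exfalso. exact (v_inj n c rad th j i Hn0 Hrad g ltac:(lia) (eq_sym E)). }
  assert (Hincl : incl X l).
  { apply (NoDup_length_incl Hl).
    - unfold l. rewrite length_map, length_seq. lia.
    - intros x Hx. unfold l in Hx. apply in_map_iff in Hx. destruct Hx as [k [<- Hk]].
      apply in_seq in Hk. apply Hall. lia. }
  exists c, rad, th. split; [exact Hrad|]. intro x. split.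
  - intro Hx. apply Hincl in Hx. unfold l in Hx. apply in_map_iff in Hx.
    destruct Hx as [k [Ek Hk]]. apply in_seq in Hk. exists k. split; [lia|]. rewrite <- Ek. reflexivity.
  - intros [k [Hk ->]]. apply Hall. exact Hk.
Qed.
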